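(* Let $G$ be a commutative group and $f_1,f_2$ bijections of $G$ such that $G(f_1)$, $G(f_2)$ are not groups. (i) If $f_1,f_2$ are conjugate in $\mathrm{Aut}(G)$ (i.e., $f_2=\psi f_1\psi^{-1}$ for some $\psi\in\mathrm{Aut}(G)$), then $G(f_1)\cong G(f_2)$. (ii) If $f_1(1)=1=f_2(1)$, then $G(f_1)\cong G(f_2)$ if and only if $f_1,f_2$ are conjugate in $\mathrm{Aut}(G)$. (iii) If $f_2\in\mathrm{Aut}(G)$, $t$ is a square in $G$, and $f_1(x)=f_2(x)t$ for every $x\in G$, then $G(f_1)\cong G(f_2)$.
   Context: Construction $G(f)$: for a commutative group $G$ (written multiplicatively) and a bijection $f:G\to G$, let $\overline{G}=\{\overline{x}:x\in G\}$ be a disjoint copy of $G$, and let $G(f)$ be the set $G\cup\overline{G}$ with multiplication $*$ defined for $x,y\in G$ by $x*y=xy$, $x*\overline{y}=\overline{xy}$, $\overline{x}*y=\overline{xy}$, $\overline{x}*\overline{y}=f(xy)$. It is a commutative loop with neutral element $1$. *)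

(* Defs.v *)
Set Implicit Arguments.

Record CommGroup := {
  carrier :> Type;
  gmul : carrier -> carrier -> carrier;
  gone : carrier;
  ginv : carrier -> carrier;
  gmul_assoc : forall x y z, gmul x (gmul y z) = gmul (gmul x y) z;
  gmul_comm : forall x y, gmul x y = gmul y x;
  gmul_1l : forall x, gmul gone x = x;
  gmul_Vl : forall x, gmul (ginv x) x = gone
}.

Definition bijective {A B : Type} (f : A -> B) : Prop :=
  exists g : B -> A, (forall x, g (f x) = x) /\ (forall y, f (g y) = y).

Definition is_aut {G : CommGroup} (psi : G -> G) : Prop :=
  bijective psi /\ forall x y, psi (gmul G x y) = gmul G (psi x) (psi y).

(* f1, f2 conjugate in Aut(G): f2 = psi f1 psi^-1 for some psi in Aut(G),
   written equivalently as f2 o psi = psi o f1. *)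
Definition conj_in_aut {G : CommGroup} (f1 f2 : G -> G) : Prop :=
  exists psi : G -> G, @is_aut G psi /\ forall x, f2 (psi x) = psi (f1 x).

(* The construction G(f): carrier G + Gbar, inl x = x, inr x = xbar. *)
Definition Gf_mul {G : CommGroup} (f : G -> G) (a b : G + G) : G + G :=
  match a, b with
  | inl x, inl y => inl (gmul G x y)
  | inl x, inr y => inr (gmul G x y)
  | inr x, inl y => inr (gmul G x y)
  | inr x, inr y => inl (f (gmul G x y))
  end.

Definition magma_is_group {T : Type} (op : T -> T -> T) : Prop :=
  (forall a b c, op a (op b c) = op (op a b) c) /\
  exists e : T, (forall a, op e a = a /\ op a e = a) /\
    forall a, exists b, op a b = e /\ op b a = e.

Definition magma_iso {T U : Type} (opT : T -> T -> T) (opU : U -> U -> U)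
  (phi : T -> U) : Prop :=
  bijective phi /\ forall a b, phi (opT a b) = opU (phi a) (phi b).

Definition magma_isomorphic {T U : Type} (opT : T -> T -> T) (opU : U -> U -> U) : Prop :=
  exists phi : T -> U, magma_iso opT opU phi.

(* Main.v *)
Require Import Defs.

Section GL.
Variable G : CommGroup.
Local Notation "x ** y" := (gmul G x y) (at level 40, left associativity).
Local Notation e := (gone G).
Local Notation iv := (ginv G).

Lemma m1r x : x ** e = x.
Proof. rewrite gmul_comm; apply gmul_1l. Qed.
Lemma mVr x : x ** iv x = e.
Proof. rewrite gmul_comm; apply gmul_Vl. Qed.
Lemma swap x y z : x ** (y ** z) = y ** (x ** z).
Proof. rewrite !gmul_assoc, (gmul_comm G x y); reflexivity. Qed.
Lemma cancl x y z : x ** y = x ** z -> y = z.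
Proof.
  intro H. rewrite <- (gmul_1l G y), <- (gmul_1l G z), <- (gmul_Vl G x),
    <- !gmul_assoc, H; reflexivity.
Qed.

Lemma transl_group (f : G -> G) c : (forall z, f z = c ** z) ->
  magma_is_group (Gf_mul f).
Proof.
  intro Hf. split.
  - intros [x|x] [y|y] [z|z]; simpl; rewrite ?Hf, ?gmul_assoc; try reflexivity;
      f_equal; rewrite <- ?gmul_assoc; apply swap.
  - exists (inl e). split.
    + intros [x|x]; simpl; rewrite gmul_1l, m1r; auto.
    + intros [x|x].
      * exists (inl (iv x)); simpl; rewrite gmul_Vl, mVr; auto.
      * exists (inr (iv x ** iv c)); simpl; rewrite !Hf; split; f_equal.
        -- rewrite (gmul_assoc G x), mVr, gmul_1l, mVr. reflexivity.
        -- rewrite (gmul_comm G _ x), (gmul_assoc G x), mVr, gmul_1l, mVr. reflexivity.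
Qed.

Lemma notP (f : G -> G) x :
  (exists a', forall b, Gf_mul f (inr x) (Gf_mul f a' b) = b) -> magma_is_group (Gf_mul f).
Proof.
  intros [[w|w] H].
  - specialize (H (inl e)). simpl in H. discriminate.
  - apply (transl_group f (iv (x ** w))). intro z.
    specialize (H (inl (iv (x ** w) ** z))). simpl in H. injection H as H.
    rewrite <- H. f_equal. rewrite gmul_assoc, gmul_assoc, mVr, gmul_1l. reflexivity.
Qed.

End GL.

Lemma iso_inv {T U : Type} (opT : T -> T -> T) (opU : U -> U -> U) phi :
  magma_iso opT opU phi -> exists g, magma_iso opU opT g /\
    (forall a, g (phi a) = a) /\ (forall b, phi (g b) = b).
Proof.
  intros [[g [H1 H2]] Hm]. exists g. split; [|split; assumption].
  split. - exists phi; split; assumption.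
  - intros a b. rewrite <- (H2 a), <- (H2 b), <- Hm, !H1. reflexivity.
Qed.

Lemma pres_inl (G : CommGroup) (f1 f2 : G -> G) phi :
  ~ magma_is_group (Gf_mul f2) -> magma_iso (Gf_mul f1) (Gf_mul f2) phi ->
  forall u, exists y, phi (inl u) = inl y.
Proof.
  intros hng [[g [Hg1 Hg2]] Hm] u.
  destruct (phi (inl u)) as [y|y] eqn:E; [eauto|].
  exfalso; apply hng; apply (@notP G f2 y).
  exists (phi (inl (ginv G u))). intro b.
  rewrite <- (Hg2 b), <- E, <- !Hm. f_equal.
  destruct (g b); simpl; rewrite gmul_assoc, mVr, gmul_1l; reflexivity.
Qed.

Lemma iso_conj (G : CommGroup) (f1 f2 : G -> G) (hf2 : bijective f2)
  (hng1 : ~ magma_is_group (Gf_mul f1)) (hng2 : ~ magma_is_group (Gf_mul f2))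
  (h1 : f1 (gone G) = gone G) (h2 : f2 (gone G) = gone G) phi :
  magma_iso (Gf_mul f1) (Gf_mul f2) phi -> conj_in_aut f1 f2.
Proof.
  intro Hiso.
  destruct (iso_inv _ _ _ Hiso) as [g [Hgiso [Hg1 Hg2]]].
  pose proof (pres_inl _ _ _ _ hng2 Hiso) as P1.
  pose proof (pres_inl _ _ _ _ hng1 Hgiso) as P2.
  destruct Hiso as [_ Hm].
  assert (P3 : forall x, exists y, phi (inr x) = inr y).
  { intro x. destruct (phi (inr x)) as [y|y] eqn:E; [|eauto].
    exfalso. destruct (P2 y) as [z Hz]. rewrite <- E, Hg1 in Hz. discriminate. }
  set (psi := fun x => match phi (inl x) with inl y => y | inr y => y end).
  set (chi := fun x => match phi (inr x) with inl y => y | inr y => y end).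
  set (psi' := fun x => match g (inl x) with inl y => y | inr y => y end).
  assert (Ep : forall x, phi (inl x) = inl (psi x)).
  { intro x; unfold psi; destruct (P1 x) as [y ->]; reflexivity. }
  assert (Ec : forall x, phi (inr x) = inr (chi x)).
  { intro x; unfold chi; destruct (P3 x) as [y ->]; reflexivity. }
  assert (Eg : forall x, g (inl x) = inl (psi' x)).
  { intro x; unfold psi'; destruct (P2 x) as [y ->]; reflexivity. }
  assert (Hpm : forall x y, psi (gmul G x y) = gmul G (psi x) (psi y)).
  { intros x y. pose proof (Hm (inl x) (inl y)) as H. simpl in H.
    rewrite !Ep in H. injection H as H. exact H. }
  assert (Hp1 : psi (gone G) = gone G).
  { symmetry. apply (cancl G (psi (gone G))). rewrite m1r, <- Hpm, gmul_1l. reflexivity. }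
  assert (Hch : forall y, chi y = gmul G (psi y) (chi (gone G))).
  { intro y. pose proof (Hm (inl y) (inr (gone G))) as H. simpl in H.
    rewrite m1r, Ep, !Ec in H. injection H as H. exact H. }
  destruct hf2 as [f2i [F1 F2]].
  assert (Hcc : gmul G (chi (gone G)) (chi (gone G)) = gone G).
  { pose proof (Hm (inr (gone G)) (inr (gone G))) as H. simpl in H.
    rewrite gmul_1l, h1, Ep, Hp1, !Ec in H. injection H as H.
    rewrite <- (F1 (gmul G _ _)), <- H. transitivity (f2i (f2 (gone G))); [rewrite h2; reflexivity | apply F1]. }
  exists psi. split; [split|].
  - exists psi'. split.
    + intro x. pose proof (Hg1 (inl x)) as H. rewrite Ep, Eg in H.
      injection H as H. exact H.
    + intro y. pose proof (Hg2 (inl y)) as H. rewrite Eg, Ep in H.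
      injection H as H. exact H.
  - exact Hpm.
  - intro x. pose proof (Hm (inr x) (inr (gone G))) as H. simpl in H.
    rewrite m1r, Ep, !Ec in H. simpl in H. rewrite (Hch x), <- gmul_assoc, Hcc, m1r in H.
    injection H as H. symmetry. exact H.
Qed.

Theorem corollary2p6 (G : CommGroup) (f1 f2 : G -> G)
  (hf1 : bijective f1) (hf2 : bijective f2)
  (hng1 : ~ magma_is_group (Gf_mul f1)) (hng2 : ~ magma_is_group (Gf_mul f2)) :
  (conj_in_aut f1 f2 -> magma_isomorphic (Gf_mul f1) (Gf_mul f2)) /\
  (f1 (gone G) = gone G -> f2 (gone G) = gone G ->
     (magma_isomorphic (Gf_mul f1) (Gf_mul f2) <-> conj_in_aut f1 f2)) /\
  (forall t : G, @is_aut G f2 -> (exists s : G, t = gmul G s s) ->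
     (forall x, f1 x = gmul G (f2 x) t) ->
     magma_isomorphic (Gf_mul f1) (Gf_mul f2)).
Proof.
  assert (PI : conj_in_aut f1 f2 -> magma_isomorphic (Gf_mul f1) (Gf_mul f2)).
  { intros [psi [[[pinv [H1 H2]] Hm] Hc]].
    exists (fun a => match a with inl x => inl (psi x) | inr x => inr (psi x) end).
    split.
    - exists (fun a => match a with inl x => inl (pinv x) | inr x => inr (pinv x) end).
      split; intros [x|x]; rewrite ?H1, ?H2; reflexivity.
    - intros [x|x] [y|y]; simpl; rewrite ?Hm; try reflexivity.
      rewrite <- Hc, Hm. reflexivity. }
  split; [exact PI|split].
  - intros h1 h2. split; [|exact PI].
    intros [phi Hiso]. exact (iso_conj _ _ _ hf2 hng1 hng2 h1 h2 _ Hiso).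
  - intros t [[f2i [F1 F2]] F2m] [s Hs] Hf1.
    set (c := f2i s).
    exists (fun a => match a with inl x => inl x | inr x => inr (gmul G x c) end).
    split.
    + exists (fun a => match a with inl x => inl x | inr x => inr (gmul G x (ginv G c)) end).
      split; intros [x|x]; try reflexivity; f_equal;
        rewrite <- gmul_assoc, ?gmul_Vl, ?mVr, m1r; reflexivity.
    + intros [x|x] [y|y]; simpl; try reflexivity.
      * f_equal. symmetry. apply gmul_assoc.
      * f_equal. rewrite <- !gmul_assoc. f_equal. apply gmul_comm.
      * f_equal. rewrite Hf1, Hs.
        replace (gmul G (gmul G x c) (gmul G y c)) with (gmul G (gmul G x y) (gmul G c c)).
        -- rewrite !F2m. unfold c. rewrite F2. reflexivity.
        -- rewrite <- !gmul_assoc. f_equal. rewrite swap. reflexivity.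
Qed.
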